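(* Let $ABC$ be a triangle with $\angle A\neq 90^\circ$. Then the points $S_A$ and $M_A$ are isogonal conjugates with respect to triangle $ABC$.
   Context: $O$ is the circumcenter of $ABC$. The symmedian from $A$ is the reflection of the median $AE$ ($E$ the midpoint of $BC$) in the bisector of angle $A$. $S_A$ is the unique point with $\angle BS_AC=2\angle A$ and $\angle CS_AA=\angle AS_AB=180^\circ-\angle A$ (directed angles); it is the point where the ray from $A$ along the symmedian from $A$ meets the arc $BC$ of the circle through $B$, $C$, $O$ that contains $O$. The point $M_A$: if $\angle A<90^\circ$, let $F$ be the second intersection of the median line $AE$ with the circumcircle of $ABC$, and $M_A$ the point on segment $AE$ with $EM_A=EF$; if $\angle A>90^\circ$, let $F$ be the point with $ABFC$ a parallelogram, and $M_A$ the second intersection of line $AE$ with the circumcircle of $FBC$. Points $P$ and $Q$ are isogonal conjugates with respect to $ABC$ if $\angle CBQ=\angle PBA$, $\angle BAP=\angle QAC$ and $\angle ACQ=\angle PCB$. *)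

(* Defs.v *)
From Stdlib Require Import Reals Lra.
Open Scope R_scope.

Definition pt := (R * R)%type.

Definition padd (P Q : pt) : pt := (fst P + fst Q, snd P + snd Q).
Definition psub (P Q : pt) : pt := (fst P - fst Q, snd P - snd Q).
Definition pscale (k : R) (P : pt) : pt := (k * fst P, k * snd P).
Definition dot (u v : pt) : R := fst u * fst v + snd u * snd v.
Definition cross (u v : pt) : R := fst u * snd v - snd u * fst v.
Definition norm (u : pt) : R := sqrt (dot u u).
Definition dist (P Q : pt) : R := norm (psub P Q).

Definition midpoint (B C : pt) : pt := pscale (1/2) (padd B C).

Definition collinear (A B C : pt) : Prop := cross (psub B A) (psub C A) = 0.

Definition is_circumcenter (O A B C : pt) : Prop :=
  dist O A = dist O B /\ dist O A = dist O C.

Definition concyclic (P Q R0 S : pt) : Prop :=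
  exists O : pt, dist O P = dist O Q /\ dist O P = dist O R0 /\ dist O P = dist O S.

(* Directed angle  ∠XYZ  = angle (mod 180°) of the rotation taking line YX to
   line YZ.  Encoded via the complex number w = (Z-Y) * conj (X-Y), whose
   real part is dot and imaginary part is cross.  Two directed angles are
   equal mod 180° iff  w1 * conj w2  is real, i.e. Im(w1 conj w2) = 0. *)
Definition dangle_eq (X Y Z X' Y' Z' : pt) : Prop :=
  let u := psub X Y in let v := psub Z Y in
  let u' := psub X' Y' in let v' := psub Z' Y' in
  cross u v * dot u' v' - dot u v * cross u' v' = 0.

Definition isogonal_conj (A B C P Q : pt) : Prop :=
  dangle_eq C B Q P B A /\ dangle_eq B A P Q A C /\ dangle_eq A C Q P C B.

Definition reflect_vec (u v : pt) : pt :=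
  psub (pscale (2 * dot v u / dot u u) u) v.

Definition bisector_dir (A B C : pt) : pt :=
  padd (pscale (/ dist B A) (psub B A)) (pscale (/ dist C A) (psub C A)).

Definition symmedian_dir (A B C : pt) : pt :=
  reflect_vec (bisector_dir A B C) (psub (midpoint B C) A).

Definition on_open_ray (A d P : pt) : Prop :=
  exists t : R, 0 < t /\ P = padd A (pscale t d).

Definition same_side (B C P Q : pt) : Prop :=
  cross (psub C B) (psub P B) * cross (psub C B) (psub Q B) > 0.

(* S is the point S_A: on the ray from A along the symmedian, and on the
   arc BC of the circle through B, C, O that contains O. *)
Definition is_SA (A B C O S : pt) : Prop :=
  on_open_ray A (symmedian_dir A B C) S /\ concyclic B C O S /\ same_side B C S O.

Definition is_MA (A B C O M : pt) : Prop :=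
  let E := midpoint B C in
  (dot (psub B A) (psub C A) > 0 ->
     exists F : pt, F <> A /\ collinear A E F /\ dist O F = dist O A /\
       (exists t : R, 0 <= t <= 1 /\ M = padd A (pscale t (psub E A))) /\
       dist E M = dist E F) /\
  (dot (psub B A) (psub C A) < 0 ->
     let F := psub (padd B C) A in
     M <> F /\ collinear A E M /\ concyclic F B C M).

(* Main.v *)
Require Import Defs.
From Stdlib Require Import Reals.
From Stdlib Require Import Lra Field Nsatz.
Open Scope R_scope.


Lemma dot_nonneg u : 0 <= dot u u.
Proof. unfold dot; nra. Qed.

Lemma dist_sq P Q R0 S : Defs.dist P Q = Defs.dist R0 S ->
  dot (psub P Q) (psub P Q) = dot (psub R0 S) (psub R0 S).
Proof. unfold Defs.dist, norm; intro H; apply sqrt_inj; auto using dot_nonneg. Qed.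

Lemma sqrt_sq_eq x : 0 <= x -> sqrt x * sqrt x = x.
Proof. intro; apply sqrt_sqrt; auto. Qed.

Lemma symm_real b1 b2 c1 c2 p q : p > 0 -> q > 0 -> p*p = b1*b1+b2*b2 -> q*q = c1*c1+c2*c2 ->
  p*q + (b1*c1+b2*c2) <> 0 ->
  let w1 := /p*b1 + /q*c1 in let w2 := /p*b2 + /q*c2 in
  let e1 := 1/2*(b1+c1) in let e2 := 1/2*(b2+c2) in
  let ew := e1*w1+e2*w2 in let ww := w1*w1+w2*w2 in
  2*ew/ww*w1 - e1 = /(2*p*q) * ((c1*c1+c2*c2)*b1 + (b1*b1+b2*b2)*c1) /\
  2*ew/ww*w2 - e2 = /(2*p*q) * ((c1*c1+c2*c2)*b2 + (b1*b1+b2*b2)*c2).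
Proof.
  intros hp hq Hp Hq Hk w1 w2 e1 e2 ew ww.
  assert (Hww : ww = 2*(p*q + (b1*c1+b2*c2))/(p*q)).
  { assert (ww = (b1*b1+b2*b2)/(p*p) + 2*(b1*c1+b2*c2)/(p*q) + (c1*c1+c2*c2)/(q*q))
      by (unfold ww, w1, w2; field; lra).
    rewrite H, <- Hp, <- Hq. field. lra. }
  assert (Hew : ew = (p + (b1*c1+b2*c2)/p + (b1*c1+b2*c2)/q + q)/2).
  { assert (ew = ((b1*b1+b2*b2)/p + (b1*c1+b2*c2)/p + (b1*c1+b2*c2)/q + (c1*c1+c2*c2)/q)/2)
      by (unfold ew, e1, e2, w1, w2; field; lra).
    rewrite H, <- Hp, <- Hq. field. lra. }
  rewrite Hww, Hew, <- Hp, <- Hq. unfold w1, w2, e1, e2.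
  split; field; repeat split; lra.
Qed.
Definition cr (x1 x2 y1 y2 : R) := x1*y2 - x2*y1.
Definition dt (x1 x2 y1 y2 : R) := x1*y1 + x2*y2.
Definition dang (u1 u2 v1 v2 u1' u2' v1' v2' : R) :=
  cr u1 u2 v1 v2 * dt u1' u2' v1' v2' - dt u1 u2 v1 v2 * cr u1' u2' v1' v2'.
Lemma fin3 (b1 b2 c1 c2 sg mu : R) :
  let bb := b1*b1+b2*b2 in let cc := c1*c1+c2*c2 in let k := b1*c1+b2*c2 in
  let g1 := cc*b1 + bb*c1 in let g2 := cc*b2+bb*c2 in
  let gg := g1*g1+g2*g2 in let N := bb+cc+2*k in
  let s1 := sg*g1 in let s2 := sg*g2 in let m1 := mu*((b1+c1)/2) in let m2 := mu*((b2+c2)/2) in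
  gg <> 0 -> N <> 0 -> sg*gg = bb*cc -> mu*N = 4*k ->
  dang (c1-b1) (c2-b2) (m1-b1) (m2-b2) (s1-b1) (s2-b2) (-b1) (-b2) = 0 /\
  dang b1 b2 s1 s2 m1 m2 c1 c2 = 0 /\
  dang (-c1) (-c2) (m1-c1) (m2-c2) (s1-c1) (s2-c2) (b1-c1) (b2-c2) = 0.
Proof. intros bb cc k g1 g2 gg N s1 s2 m1 m2 Hg HN Hs Hm.
  assert (E1 : sg = bb*cc/gg) by (field_simplify_eq; auto; lra).
  assert (E2 : mu = 4*k/N) by (field_simplify_eq; auto; lra).
  unfold s1, s2, m1, m2. rewrite E1, E2. unfold dang, cr, dt, gg, g1, g2, N, k, bb, cc in *.
  repeat split; field; auto. Qed.

Lemma N_pos b1 b2 c1 c2 : b1*c2 - b2*c1 <> 0 -> (b1+c1)*(b1+c1)+(b2+c2)*(b2+c2) > 0.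
Proof. intro H. destruct (Req_dec ((b1+c1)*(b1+c1)+(b2+c2)*(b2+c2)) 0) as [E|E].
  - exfalso. destruct (Rplus_sqr_eq_0 (b1+c1) (b2+c2)) as [? ?]; [unfold Rsqr; exact E|].
    apply H. replace c1 with (-b1) by lra. replace c2 with (-b2) by lra. ring.
  - pose proof (Rle_0_sqr (b1+c1)); pose proof (Rle_0_sqr (b2+c2)); unfold Rsqr in *; lra. Qed.

Lemma n_pos b1 b2 c1 c2 : b1*c2 - b2*c1 <> 0 -> (b1-c1)*(b1-c1)+(b2-c2)*(b2-c2) > 0.
Proof. intro H. destruct (Req_dec ((b1-c1)*(b1-c1)+(b2-c2)*(b2-c2)) 0) as [E|E].
  - exfalso. destruct (Rplus_sqr_eq_0 (b1-c1) (b2-c2)) as [? ?]; [unfold Rsqr; exact E|].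
    apply H. replace c1 with b1 by lra. replace c2 with b2 by lra. ring.
  - pose proof (Rle_0_sqr (b1-c1)); pose proof (Rle_0_sqr (b2-c2)); unfold Rsqr in *; lra. Qed.

Lemma par_e e1 e2 f1 f2 : e1*e1+e2*e2 <> 0 -> e1*f2 - e2*f1 = 0 ->
  exists phi, f1 = phi*e1 /\ f2 = phi*e2.
Proof. intros He Hc. exists ((f1*e1+f2*e2)/(e1*e1+e2*e2)). split.
  - apply (Rmult_eq_reg_r (e1*e1+e2*e2)); [|auto].
    replace ((f1 * e1 + f2 * e2) / (e1 * e1 + e2 * e2) * e1 * (e1 * e1 + e2 * e2))
      with ((f1 * e1 + f2 * e2) * e1) by (field; auto). nsatz.
  - apply (Rmult_eq_reg_r (e1*e1+e2*e2)); [|auto].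
    replace ((f1 * e1 + f2 * e2) / (e1 * e1 + e2 * e2) * e2 * (e1 * e1 + e2 * e2))
      with ((f1 * e1 + f2 * e2) * e2) by (field; auto). nsatz.
Qed.

Lemma acute_M b1 b2 c1 c2 o1 o2 f1 f2 m1 m2 t :
  let bb := b1*b1+b2*b2 in let cc := c1*c1+c2*c2 in let k := b1*c1+b2*c2 in
  let N := bb+cc+2*k in let e1 := (b1+c1)/2 in let e2 := (b2+c2)/2 in
  b1*c2 - b2*c1 <> 0 -> k > 0 ->
  bb = 2*(o1*b1+o2*b2) -> cc = 2*(o1*c1+o2*c2) ->
  e1*f2 - e2*f1 = 0 -> ~ (f1 = 0 /\ f2 = 0) ->
  (o1-f1)*(o1-f1)+(o2-f2)*(o2-f2) = o1*o1+o2*o2 ->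
  m1 = t*e1 -> m2 = t*e2 -> 0 <= t <= 1 ->
  (m1-e1)*(m1-e1)+(m2-e2)*(m2-e2) = (f1-e1)*(f1-e1)+(f2-e2)*(f2-e2) ->
  t*N = 4*k.
Proof.
  intros bb cc k N e1 e2 HD Hk Hob Hoc Hcol Hf0 Hcirc Hm1 Hm2 Ht Hd.
  pose proof (N_pos b1 b2 c1 c2 HD) as HN. pose proof (n_pos b1 b2 c1 c2 HD) as Hn.
  assert (Hee : e1*e1+e2*e2 > 0) by (unfold e1, e2; nra).
  destruct (par_e e1 e2 f1 f2 ltac:(lra) Hcol) as [phi [Hf1 Hf2]].
  assert (Hphi0 : phi <> 0) by (intro; subst; apply Hf0; split; ring).
  assert (Hc2 : phi * (phi*(e1*e1+e2*e2) - 2*(e1*o1+e2*o2)) = 0) by (subst f1 f2; nra).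
  assert (Hc3 : phi*N = 2*(bb+cc)).
  { apply Rmult_integral in Hc2. destruct Hc2 as [|Hc2]; [contradiction|].
    unfold N, e1, e2, bb, cc, k in *. lra. }
  assert (Hd2 : (t-1)*(t-1)*(e1*e1+e2*e2) = (phi-1)*(phi-1)*(e1*e1+e2*e2)).
  { subst m1 m2 f1 f2. nra. }
  assert (Hd3 : (t-phi)*(t+phi-2) = 0).
  { apply Rmult_eq_reg_r in Hd2; [nra|lra]. }
  assert (phi > 1).
  { assert (Hq : (phi-1)*N > 0).
    { replace ((phi-1)*N) with (phi*N - N) by ring. rewrite Hc3.
      replace (2 * (bb + cc) - N) with ((b1-c1)*(b1-c1)+(b2-c2)*(b2-c2)) by (unfold N, bb, cc, k; ring).
      exact Hn. }
    destruct (Rle_or_lt phi 1) as [Hle|]; [|lra].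
    assert (HN' : N > 0) by (replace N with ((b1+c1)*(b1+c1)+(b2+c2)*(b2+c2)) by (unfold N,bb,cc,k; ring); exact HN).
    assert ((1-phi)*N >= 0) by (apply Rle_ge, Rmult_le_pos; lra).
    assert ((phi-1)*N = -((1-phi)*N)) by ring. lra. }
  apply Rmult_integral in Hd3. destruct Hd3; [lra|].
  replace t with (2-phi) by lra. replace ((2-phi)*N) with (2*N - phi*N) by ring.
  rewrite Hc3. unfold N, bb, cc, k; ring.
Qed.

Lemma ob_circ b1 b2 c1 c2 o1 o2 m1 m2 x y :
  b1*b1+b2*b2 = 2*(o1*b1+o2*b2) -> c1*c1+c2*c2 = 2*(o1*c1+o2*c2) ->
  (x-(b1+c1))*(x-(b1+c1))+(y-(b2+c2))*(y-(b2+c2)) = (x-b1)*(x-b1)+(y-b2)*(y-b2) ->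
  (x-(b1+c1))*(x-(b1+c1))+(y-(b2+c2))*(y-(b2+c2)) = (x-c1)*(x-c1)+(y-c2)*(y-c2) ->
  (x-(b1+c1))*(x-(b1+c1))+(y-(b2+c2))*(y-(b2+c2)) = (x-m1)*(x-m1)+(y-m2)*(y-m2) ->
  (b1*c2 - b2*c1) * ((m1-(b1+c1)+o1)*(m1-(b1+c1)+o1) + (m2-(b2+c2)+o2)*(m2-(b2+c2)+o2) - (o1*o1+o2*o2)) = 0.
Proof. intros. nsatz. Qed.

Lemma obtuse_M b1 b2 c1 c2 o1 o2 m1 m2 x y :
  let bb := b1*b1+b2*b2 in let cc := c1*c1+c2*c2 in let k := b1*c1+b2*c2 in
  let N := bb+cc+2*k in let e1 := (b1+c1)/2 in let e2 := (b2+c2)/2 in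
  b1*c2 - b2*c1 <> 0 ->
  bb = 2*(o1*b1+o2*b2) -> cc = 2*(o1*c1+o2*c2) ->
  e1*m2 - e2*m1 = 0 -> ~ (m1 = b1+c1 /\ m2 = b2+c2) ->
  (x-(b1+c1))*(x-(b1+c1))+(y-(b2+c2))*(y-(b2+c2)) = (x-b1)*(x-b1)+(y-b2)*(y-b2) ->
  (x-(b1+c1))*(x-(b1+c1))+(y-(b2+c2))*(y-(b2+c2)) = (x-c1)*(x-c1)+(y-c2)*(y-c2) ->
  (x-(b1+c1))*(x-(b1+c1))+(y-(b2+c2))*(y-(b2+c2)) = (x-m1)*(x-m1)+(y-m2)*(y-m2) ->
  exists mu, m1 = mu*e1 /\ m2 = mu*e2 /\ mu*N = 4*k.
Proof.
  intros bb cc k N e1 e2 HD Hob Hoc Hcol Hm0 H1 H2 H3.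
  pose proof (N_pos b1 b2 c1 c2 HD) as HN.
  assert (Hee : e1*e1+e2*e2 > 0) by (unfold e1, e2; nra).
  assert (HG : (b1*c2 - b2*c1) * ((m1-(b1+c1)+o1)*(m1-(b1+c1)+o1) + (m2-(b2+c2)+o2)*(m2-(b2+c2)+o2) - (o1*o1+o2*o2)) = 0).
  { apply (ob_circ b1 b2 c1 c2 o1 o2 m1 m2 x y); assumption. }
  apply Rmult_integral in HG. destruct HG as [HG|HG]; [contradiction|].
  destruct (par_e e1 e2 m1 m2 ltac:(lra) Hcol) as [mu [Hf1 Hf2]].
  exists mu. split; [auto|split; [auto|]].
  assert (Hmu : mu - 2 <> 0).
  { intro E. apply Hm0. subst m1 m2. unfold e1, e2. split; nra. }
  assert (HG2 : (mu-2)*((mu-2)*N + 2*(bb+cc)) = 0).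
  { subst m1 m2. unfold N, bb, cc, k, e1, e2 in *. nra. }
  apply Rmult_integral in HG2. destruct HG2; [contradiction|]. unfold N in *. lra.
Qed.
Lemma phi_zero b1 b2 c1 c2 o1 o2 s1 s2 x y :
  (b1*b1+b2*b2) = 2*(o1*b1+o2*b2) ->
  (c1*c1+c2*c2) = 2*(o1*c1+o2*c2) ->
  (x-b1)*(x-b1)+(y-b2)*(y-b2) = (x-c1)*(x-c1)+(y-c2)*(y-c2) ->
  (x-b1)*(x-b1)+(y-b2)*(y-b2) = (x-o1)*(x-o1)+(y-o2)*(y-o2) ->
  (x-b1)*(x-b1)+(y-b2)*(y-b2) = (x-s1)*(x-s1)+(y-s2)*(y-s2) ->
  ((c1-b1)*(o2-b2) - (c2-b2)*(o1-b1)) * (s1*s1+s2*s2 - 2*(s1*o1+s2*o2))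
  + (o1*o1+o2*o2) * ((c1-b1)*(s2-b2) - (c2-b2)*(s1-b1)) = 0.
Proof. intros. nsatz. Qed.
Lemma quad b1 b2 c1 c2 o1 o2 sg :
  let bb := b1*b1+b2*b2 in let cc := c1*c1+c2*c2 in let k := b1*c1+b2*c2 in
  let g1 := cc*b1 + bb*c1 in let g2 := cc*b2+bb*c2 in
  let D := b1*c2 - b2*c1 in let n := (b1-c1)*(b1-c1)+(b2-c2)*(b2-c2) in
  let s1 := sg*g1 in let s2 := sg*g2 in
  bb = 2*(o1*b1+o2*b2) ->
  cc = 2*(o1*c1+o2*c2) ->
  4*D*(((c1-b1)*(o2-b2) - (c2-b2)*(o1-b1)) * (s1*s1+s2*s2 - 2*(s1*o1+s2*o2))
  + (o1*o1+o2*o2) * ((c1-b1)*(s2-b2) - (c2-b2)*(s1-b1)))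
  = n*(sg*(g1*g1+g2*g2) - bb*cc)*(2*k*sg-1).
Proof. intros. subst bb cc k g1 g2 D n s1 s2. nsatz. Qed.

Lemma side b1 b2 c1 c2 o1 o2 sg :
  let bb := b1*b1+b2*b2 in let cc := c1*c1+c2*c2 in let k := b1*c1+b2*c2 in
  let g1 := cc*b1 + bb*c1 in let g2 := cc*b2+bb*c2 in
  let D := b1*c2 - b2*c1 in let n := (b1-c1)*(b1-c1)+(b2-c2)*(b2-c2) in
  let s1 := sg*g1 in let s2 := sg*g2 in
  bb = 2*(o1*b1+o2*b2) ->
  cc = 2*(o1*c1+o2*c2) ->
  2*k*sg = 1 ->
  D*(4*(((c1-b1)*(s2-b2) - (c2-b2)*(s1-b1)) * ((c1-b1)*(o2-b2) - (c2-b2)*(o1-b1))) + n*n) = 0.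
Proof. intros. subst bb cc k g1 g2 D n s1 s2. nsatz. Qed.

Lemma S_sol b1 b2 c1 c2 o1 o2 x y sg :
  let bb := b1*b1+b2*b2 in let cc := c1*c1+c2*c2 in
  let g1 := cc*b1 + bb*c1 in let g2 := cc*b2+bb*c2 in
  let s1 := sg*g1 in let s2 := sg*g2 in
  b1*c2 - b2*c1 <> 0 ->
  bb = 2*(o1*b1+o2*b2) -> cc = 2*(o1*c1+o2*c2) ->
  (x-b1)*(x-b1)+(y-b2)*(y-b2) = (x-c1)*(x-c1)+(y-c2)*(y-c2) ->
  (x-b1)*(x-b1)+(y-b2)*(y-b2) = (x-o1)*(x-o1)+(y-o2)*(y-o2) ->
  (x-b1)*(x-b1)+(y-b2)*(y-b2) = (x-s1)*(x-s1)+(y-s2)*(y-s2) ->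
  ((c1-b1)*(s2-b2) - (c2-b2)*(s1-b1)) * ((c1-b1)*(o2-b2) - (c2-b2)*(o1-b1)) > 0 ->
  sg*(g1*g1+g2*g2) = bb*cc.
Proof.
  intros bb cc g1 g2 s1 s2 HD Hob Hoc H1 H2 H3 Hs.
  pose proof (phi_zero b1 b2 c1 c2 o1 o2 s1 s2 x y Hob Hoc H1 H2 H3) as Hphi.
  pose proof (quad b1 b2 c1 c2 o1 o2 sg Hob Hoc) as Hq. simpl in Hq.
  fold bb cc g1 g2 s1 s2 in Hq. rewrite Hphi in Hq.
  pose proof (n_pos b1 b2 c1 c2 HD) as Hn.
  assert (Hz : ((b1-c1)*(b1-c1)+(b2-c2)*(b2-c2)) * ((sg*(g1*g1+g2*g2) - bb*cc)*(2*(b1*c1+b2*c2)*sg-1)) = 0)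
    by (rewrite <- Rmult_assoc, <- Hq; ring).
  apply Rmult_integral in Hz. destruct Hz as [Hz|Hz]; [lra|].
  apply Rmult_integral in Hz. destruct Hz as [Hz|Hz]; [lra|].
  exfalso.
  pose proof (side b1 b2 c1 c2 o1 o2 sg Hob Hoc ltac:(lra)) as Hsd. simpl in Hsd.
  fold bb cc g1 g2 s1 s2 in Hsd.
  apply Rmult_integral in Hsd. destruct Hsd as [Hsd|Hsd]; [contradiction|].
  nra.
Qed.

Lemma symm_real2 b1 b2 c1 c2 e1 e2 p q : p > 0 -> q > 0 -> p*p = b1*b1+b2*b2 -> q*q = c1*c1+c2*c2 ->
  p*q + (b1*c1+b2*c2) <> 0 -> e1 = 1/2*(b1+c1) -> e2 = 1/2*(b2+c2) ->
  2*(e1*(/p*b1 + /q*c1)+e2*(/p*b2 + /q*c2))/((/p*b1 + /q*c1)*(/p*b1 + /q*c1)+(/p*b2 + /q*c2)*(/p*b2 + /q*c2))*(/p*b1 + /q*c1) - e1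
   = /(2*p*q) * ((c1*c1+c2*c2)*b1 + (b1*b1+b2*b2)*c1) /\
  2*(e1*(/p*b1 + /q*c1)+e2*(/p*b2 + /q*c2))/((/p*b1 + /q*c1)*(/p*b1 + /q*c1)+(/p*b2 + /q*c2)*(/p*b2 + /q*c2))*(/p*b2 + /q*c2) - e2
   = /(2*p*q) * ((c1*c1+c2*c2)*b2 + (b1*b1+b2*b2)*c2).
Proof. intros. subst e1 e2. apply symm_real; auto. Qed.

Lemma sos_pos u v : ~ (u = 0 /\ v = 0) -> u*u+v*v > 0.
Proof. intro H. destruct (Req_dec (u*u+v*v) 0) as [E|E].
  - exfalso. apply H. apply Rplus_sqr_eq_0. unfold Rsqr; exact E.
  - pose proof (Rle_0_sqr u); pose proof (Rle_0_sqr v); unfold Rsqr in *; lra. Qed.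

Lemma pq_k b1 b2 c1 c2 p q : p > 0 -> q > 0 -> p*p = b1*b1+b2*b2 -> q*q = c1*c1+c2*c2 ->
  b1*c2 - b2*c1 <> 0 -> p*q + (b1*c1+b2*c2) <> 0.
Proof. intros hp hq Hp Hq HD.
  assert (E : (p*q)*(p*q) - (b1*c1+b2*c2)*(b1*c1+b2*c2) = (b1*c2-b2*c1)*(b1*c2-b2*c1)).
  { replace ((p*q)*(p*q)) with ((p*p)*(q*q)) by ring. rewrite Hp, Hq. ring. }
  assert (Hd : (b1*c2-b2*c1)*(b1*c2-b2*c1) > 0) by (apply Rsqr_pos_lt in HD; unfold Rsqr in HD; lra).
  assert (p*q > 0) by (apply Rmult_lt_0_compat; lra).
  intro Z. assert (b1*c1+b2*c2 = -(p*q)) by lra. rewrite H0 in E. lra. Qed.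

Theorem theorem12 (A B C O S M : pt) :
  ~ collinear A B C ->
  dot (psub B A) (psub C A) <> 0 ->
  is_circumcenter O A B C ->
  is_SA A B C O S ->
  is_MA A B C O M ->
  isogonal_conj A B C S M.
Proof.
  intros Hnc Hk [HOB HOC] [[t [Ht HS]] [[Oc [H1 [H2 H3]]] Hside]] HM.
  apply dist_sq in HOB. apply dist_sq in HOC. apply dist_sq in H1.
  apply dist_sq in H2. apply dist_sq in H3.
  destruct A as [a1 a2], B as [xb yb], C as [xc yc], O as [xo yo], S as [xs ys], M as [xm ym], Oc as [x y].
  unfold symmedian_dir, reflect_vec, bisector_dir, midpoint in HS.
  set (p := Defs.dist (xb, yb) (a1, a2)) in HS.
  set (q := Defs.dist (xc, yc) (a1, a2)) in HS.
  assert (Hp : p * p = (xb-a1)*(xb-a1)+(yb-a2)*(yb-a2)).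
  { unfold p, Defs.dist, Defs.norm. rewrite sqrt_sqrt; [reflexivity|apply dot_nonneg]. }
  assert (Hq : q * q = (xc-a1)*(xc-a1)+(yc-a2)*(yc-a2)).
  { unfold q, Defs.dist, Defs.norm. rewrite sqrt_sqrt; [reflexivity|apply dot_nonneg]. }
  unfold collinear, cross, psub in Hnc; simpl in Hnc.
  assert (Hp0 : p >= 0) by (unfold p, Defs.dist, Defs.norm; apply Rle_ge, sqrt_pos).
  assert (Hq0 : q >= 0) by (unfold q, Defs.dist, Defs.norm; apply Rle_ge, sqrt_pos).
  unfold same_side, cross, dot, psub, padd, pscale in *; simpl in *.
  set (b1 := xb - a1) in *. assert (E : xb = a1 + b1) by (unfold b1; ring). clearbody b1. subst xb.
  set (b2 := yb - a2) in *. assert (E : yb = a2 + b2) by (unfold b2; ring). clearbody b2. subst yb.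
  set (c1 := xc - a1) in *. assert (E : xc = a1 + c1) by (unfold c1; ring). clearbody c1. subst xc.
  set (c2 := yc - a2) in *. assert (E : yc = a2 + c2) by (unfold c2; ring). clearbody c2. subst yc.
  set (o1 := xo - a1) in *. assert (E : xo = a1 + o1) by (unfold o1; ring). clearbody o1. subst xo.
  set (o2 := yo - a2) in *. assert (E : yo = a2 + o2) by (unfold o2; ring). clearbody o2. subst yo.
  set (s1 := xs - a1) in *. assert (E : xs = a1 + s1) by (unfold s1; ring). clearbody s1. subst xs.
  set (s2 := ys - a2) in *. assert (E : ys = a2 + s2) by (unfold s2; ring). clearbody s2. subst ys.
  set (m1 := xm - a1) in *. assert (E : xm = a1 + m1) by (unfold m1; ring). clearbody m1. subst xm.
  set (m2 := ym - a2) in *. assert (E : ym = a2 + m2) by (unfold m2; ring). clearbody m2. subst ym.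
  set (x1 := x - a1) in *. assert (E : x = a1 + x1) by (unfold x1; ring). clearbody x1. subst x.
  set (y1 := y - a2) in *. assert (E : y = a2 + y1) by (unfold y1; ring). clearbody y1. subst y.
  try rewrite !Rplus_minus_l in *.
  clearbody p q.
  assert (Hbb : b1*b1+b2*b2 > 0) by (apply sos_pos; intros [-> ->]; apply Hnc; ring).
  assert (Hcc : c1*c1+c2*c2 > 0) by (apply sos_pos; intros [-> ->]; apply Hnc; ring).
  assert (hp : p > 0).
  { destruct (Rle_lt_or_eq_dec 0 p) as [|E]; [lra|lra|]. rewrite <- E in Hp. lra. }
  assert (hq : q > 0).
  { destruct (Rle_lt_or_eq_dec 0 q) as [|E]; [lra|lra|]. rewrite <- E in Hq. lra. }
  destruct (symm_real2 b1 b2 c1 c2 (1/2*(a1+b1+(a1+c1)) - a1) (1/2*(a2+b2+(a2+c2)) - a2) p q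
     hp hq Hp Hq (pq_k b1 b2 c1 c2 p q hp hq Hp Hq Hnc) ltac:(lra) ltac:(lra)) as [E1 E2].
  rewrite E1, E2 in HS. injection HS as Hs1 Hs2.
  set (sg := t * / (2*p*q)).
  assert (Hs1' : s1 = sg * ((c1*c1+c2*c2)*b1 + (b1*b1+b2*b2)*c1)) by (unfold sg; lra).
  assert (Hs2' : s2 = sg * ((c1*c1+c2*c2)*b2 + (b1*b1+b2*b2)*c2)) by (unfold sg; lra).
  clear Hs1 Hs2 E1 E2. clearbody sg. subst s1 s2.
  assert (Hob : b1*b1+b2*b2 = 2*(o1*b1+o2*b2)) by lra.
  assert (Hoc : c1*c1+c2*c2 = 2*(o1*c1+o2*c2)) by lra.
  pose proof (S_sol b1 b2 c1 c2 o1 o2 x1 y1 sg Hnc Hob Hoc ltac:(lra) ltac:(lra) ltac:(lra) ltac:(lra)) as Hsg.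
  simpl in Hsg.
  assert (HMU : exists mu, m1 = mu*((b1+c1)/2) /\ m2 = mu*((b2+c2)/2) /\
     mu*((b1*b1+b2*b2)+(c1*c1+c2*c2)+2*(b1*c1+b2*c2)) = 4*(b1*c1+b2*c2)).
  { unfold is_MA in HM. destruct HM as [HMa HMo].
    destruct (Rlt_or_le 0 (b1*c1+b2*c2)) as [Hpos|Hneg].
    - destruct HMa as [[f1 f2] [HFA [Hcol [HOF [[tt [Htt HMt]] HEM]]]]].
      { unfold dot, psub; simpl. lra. }
      apply dist_sq in HOF. apply dist_sq in HEM.
      unfold collinear, midpoint, cross, dot, psub, padd, pscale in *; simpl in *.
      injection HMt as Hm1 Hm2.
      exists tt. split; [lra|split; [lra|]].
      apply (acute_M b1 b2 c1 c2 o1 o2 (f1-a1) (f2-a2) m1 m2 tt); try lra.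
      + intros [Z1 Z2]. apply HFA. f_equal; lra.
    - assert (Hneg' : b1*c1+b2*c2 < 0) by lra.
      destruct HMo as [HMF [Hcol [[x2 y2] [G1 [G2 G3]]]]].
      { unfold dot, psub; simpl. lra. }
      apply dist_sq in G1. apply dist_sq in G2. apply dist_sq in G3.
      unfold collinear, midpoint, cross, dot, psub, padd, pscale in *; simpl in *.
      apply (obtuse_M b1 b2 c1 c2 o1 o2 m1 m2 (x2-a1) (y2-a2)); try lra.
      intros [Z1 Z2]. apply HMF. f_equal; lra. }
  destruct HMU as [mu [Hm1 [Hm2 Hmu]]]. subst m1 m2.
  pose proof (N_pos b1 b2 c1 c2 Hnc) as HN.
  assert (HNe : (b1*b1+b2*b2)+(c1*c1+c2*c2)+2*(b1*c1+b2*c2) <> 0) by lra.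
  assert (Hgg : ((c1 * c1 + c2 * c2) * b1 + (b1 * b1 + b2 * b2) * c1) *
     ((c1 * c1 + c2 * c2) * b1 + (b1 * b1 + b2 * b2) * c1) +
     ((c1 * c1 + c2 * c2) * b2 + (b1 * b1 + b2 * b2) * c2) *
     ((c1 * c1 + c2 * c2) * b2 + (b1 * b1 + b2 * b2) * c2) <> 0).
  { replace (((c1 * c1 + c2 * c2) * b1 + (b1 * b1 + b2 * b2) * c1) *
     ((c1 * c1 + c2 * c2) * b1 + (b1 * b1 + b2 * b2) * c1) +
     ((c1 * c1 + c2 * c2) * b2 + (b1 * b1 + b2 * b2) * c2) *
     ((c1 * c1 + c2 * c2) * b2 + (b1 * b1 + b2 * b2) * c2)) with
     ((b1*b1+b2*b2)*(c1*c1+c2*c2)*((b1+c1)*(b1+c1)+(b2+c2)*(b2+c2))) by ring.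
    apply Rgt_not_eq. apply Rmult_gt_0_compat; [apply Rmult_gt_0_compat|]; lra. }
  destruct (fin3 b1 b2 c1 c2 sg mu Hgg HNe Hsg Hmu) as [G1 [G2 G3]].
  unfold dang, cr, dt in G1, G2, G3.
  unfold isogonal_conj, dangle_eq, cross, dot, psub; simpl.
  split; [lra|split; lra].
Qed.
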